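(* Let $\mathcal{X}$ be a finite set with $|\mathcal{X}|=r\geq 2$, let $P_X$ be a probability mass function on $\mathcal{X}$ with $P_X(x)>0$ for all $x\in\mathcal{X}$, let $\mathcal{Z}=\{0,1,\ldots,k-1\}$ with $2\leq k\leq r$, let $f:\mathcal{X}\to\mathcal{Z}$ be a given mapping, and fix an integer list size $l$ with $1\leq l<r$. Let $\pi^{(l)}(\rho)$ denote list $\rho$-privacy and $\Lambda_\rho$ the set defined in the context. Then: (i) For $0\leq\rho\leq 1/k$, $\pi^{(l)}(\rho)=1-P_X(L_l^* )$. (ii) For $\rho=1$, $\pi^{(l)}(1)=1-\sum_{i\in\mathcal{Z}} P_X\big([f^{-1}(i)]_{\min\{l,|f^{-1}(i)|\}}\big)$. (iii) For $0\leq\rho\leq 1$, $$\pi^{(l)}(\rho)\leq \pi_u^{(l)}(\rho):=1-\Big[P_X(\Lambda_\rho)+\rho\sum_{i\in\mathcal{Z}}P_X\big([f^{-1}(i)\setminus\Lambda_\rho]_{\min\{l-|\Lambda_\rho|,\,|f^{-1}(i)\setminus\Lambda_\rho|\}}\big)\Big].$$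
   Context: Notation: $f^{-1}(i)=\{x\in\mathcal{X}: f(x)=i\}$. For $A\subseteq\mathcal{X}$ and $0\leq t\leq|A|$, $[A]_t$ denotes a set of $t$ largest $P_X$-probability elements of $A$ (ties broken arbitrarily), with $[A]_0=\emptyset$; $L_t^*=[\mathcal{X}]_t$. For a set $S$, $P_X(S)=\sum_{x\in S}P_X(x)$. A $\rho$-recoverable query response ($\rho$-QR), for $0\leq\rho\leq 1$, is a stochastic matrix $W:\mathcal{X}\to\mathcal{Z}$ (i.e. $W(i|x)\geq 0$, $\sum_{i\in\mathcal{Z}}W(i|x)=1$) with $W(f(x)|x)\geq\rho$ for all $x\in\mathcal{X}$; equivalently a $\mathcal{Z}$-valued random variable $F(X)$ with $P(F(X)=i\mid X=x)=W(i|x)$, where $X\sim P_X$. Let $\mathcal{L}_l$ be the set of all $l$-element subsets of $\mathcal{X}$. The list privacy of a $\rho$-QR $W$ is $\pi^{(l)}_\rho(W)=\min_{g}P(X\notin g(F(X)))$, the minimum over all maps $g:\mathcal{Z}\to\mathcal{L}_l$; equivalently $\pi^{(l)}_\rho(W)=1-\sum_{i\in\mathcal{Z}}\max_{L\in\mathcal{L}_l}\sum_{x\in L}P_X(x)W(i|x)$. List $\rho$-privacy is $\pi^{(l)}(\rho)=\max\{\pi^{(l)}_\rho(W): W \text{ a } \rho\text{-QR}\}$. For $0\leq\rho\leq1$, $\Lambda_\rho$ denotes a maximizer (not necessarily unique) over subsets $\Lambda\subset\mathcal{X}$ with $0\leq|\Lambda|\leq l$ of $$P_X(\Lambda)+\rho\sum_{i\in\mathcal{Z}}P_X\big([f^{-1}(i)\setminus\Lambda]_{\min\{l-|\Lambda|,\,|f^{-1}(i)\setminus\Lambda|\}}\big).$$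 *)

(* Defs.v *)
From mathcomp Require Import all_boot all_order all_algebra.
From mathcomp Require Import reals.
Set Implicit Arguments. Unset Strict Implicit. Unset Printing Implicit Defensive.
Import Order.TTheory GRing.Theory Num.Theory.
Local Open Scope ring_scope.

Section Defs.
Variables (R : realType) (X : finType) (P : X -> R).

Definition PX (S : {set X}) : R := \sum_(x in S) P x.

Definition is_top (A : {set X}) (t : nat) (S : {set X}) : bool :=
  [&& S \subset A, #|S| == t &
      [forall x in S, forall y in A :\: S, P y <= P x]].

(* [A]_t : some such set, ties broken arbitrarily (via pick) *)
Definition top_set (A : {set X}) (t : nat) : {set X} :=
  odflt set0 [pick S : {set X} | is_top A t S].

Definition fpre (k : nat) (f : X -> 'I_k) (i : 'I_k) : {set X} :=
  [set x | f x == i].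

Definition is_QR (k : nat) (f : X -> 'I_k) (rho : R) (W : X -> 'I_k -> R) : Prop :=
  (forall x i, 0 <= W x i) /\ (forall x, \sum_(i < k) W x i = 1) /\
  (forall x, rho <= W x (f x)).

Definition list_priv (k l : nat) (W : X -> 'I_k -> R) : R :=
  1 - \sum_(i < k) \big[Num.max/0]_(L : {set X} | #|L| == l)
                      \sum_(x in L) P x * W x i.

Definition is_list_rho_privacy (k l : nat) (f : X -> 'I_k) (rho v : R) : Prop :=
  (exists W, is_QR f rho W /\ list_priv l W = v) /\
  (forall W, is_QR f rho W -> list_priv l W <= v).

Definition Lam_obj (k l : nat) (f : X -> 'I_k) (rho : R) (Lam : {set X}) : R :=
  PX Lam + rho * \sum_(i < k)
     PX (top_set (fpre f i :\: Lam) (minn (l - #|Lam|) #|fpre f i :\: Lam|)).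

Definition is_Lambda_rho (k l : nat) (f : X -> 'I_k) (rho : R) (Lam : {set X}) : Prop :=
  (#|Lam| <= l)%N /\
  (forall L' : {set X}, (#|L'| <= l)%N -> Lam_obj l f rho L' <= Lam_obj l f rho Lam).

End Defs.

(* Main.v *)
Require Import Defs.
From mathcomp Require Import all_boot all_order all_algebra.
From mathcomp Require Import reals.
From mathcomp Require Import zify ring lra.
Import Order.TTheory GRing.Theory Num.Theory.
Local Open Scope ring_scope.
Section S.
Variables (R : realType) (X : finType) (P : X -> R).
Hypothesis P0 : forall x, 0 <= P x.
Lemma sum_sub (g : X -> R) (A B : {set X}) : (forall x, 0 <= g x) -> A \subset B ->
  \sum_(x in A) g x <= \sum_(x in B) g x.
Proof.
move=> g0 AB; rewrite [X in _ <= X](big_setID A) /= (setIidPr AB) lerDl.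
by apply: sumr_ge0.
Qed.

Lemma extend (A B : {set X}) t : B \subset A -> (#|B| <= t <= #|A|)%N ->
  exists S : {set X}, [/\ B \subset S, S \subset A & #|S| = t].
Proof.
move=> BA /andP[Bt tA]; move Hd: (t - #|B|)%N => d.
elim: d B BA Hd Bt => [|d IH] B BA Hd Bt.
  by exists B; split => //; apply/eqP; rewrite eqn_leq Bt /=; lia.
have [x xA xB] : exists2 x, x \in A & x \notin B.
  apply/exists_inP; rewrite -negb_forall_in. apply/negP=> /forall_inP H.
  have : A \subset B by apply/subsetP=> y /H.
  by move/subset_leq_card; lia.
have h1' : x |: B \subset A by rewrite subUset sub1set xA.
have c : #|x |: B| = #|B|.+1 by rewrite cardsU1 xB.
have [S [h1 h2 h3]] := IH (x |: B) h1' ltac:(rewrite c; lia) ltac:(rewrite c; lia).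
by exists S; split => //; apply: subset_trans h1; apply: subsetUr.
Qed.

Lemma swapPX (L : {set X}) x y : y \in L -> x \notin L ->
  PX P (x |: (L :\ y)) = PX P L - P y + P x.
Proof.
move=> yL xL; rewrite /PX big_setU1 /=; last by rewrite !inE negb_and xL orbT.
by rewrite (big_setD1 y yL) /=; ring.
Qed.

Lemma swapcard (L : {set X}) x y : y \in L -> x \notin L ->
  #|x |: (L :\ y)| = #|L|.
Proof.
move=> yL xL; rewrite cardsU1 !inE negb_and xL orbT (cardsD1 y L) yL.
by rewrite add1n.
Qed.

Lemma top_exists (A : {set X}) t : (t <= #|A|)%N -> is_top P A t (top_set P A t).
Proof.
move=> tA; rewrite /top_set; case: pickP => //= H; exfalso.
have [S0 [_ S0A S0t]] : exists S : {set X}, [/\ set0 \subset S, S \subset A & #|S| = t].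
  by apply: extend; rewrite ?sub0set // cards0.
have HS0 : (fun S : {set X} => (S \subset A) && (#|S| == t)) S0 by rewrite S0A S0t eqxx.
case: (@arg_maxP _ R _ S0 (fun S : {set X} => (S \subset A) && (#|S| == t)) (PX P) HS0).
move=> S /andP[SA /eqP St] Smax.
move: (H S); rewrite /is_top SA St eqxx /=; move/negP; apply.
apply/forall_inP => x xS; apply/forall_inP => y; rewrite inE => /andP[yS yA].
rewrite leNgt; apply/negP => lt.
have xL : y \notin S by [].
have := Smax (y |: (S :\ x)); rewrite swapcard // St eqxx andbT.
have -> : y |: (S :\ x) \subset A.
  by rewrite subUset sub1set yA /=; apply: subset_trans SA; apply: subsetDl.
move=> /(_ isT); rewrite swapPX //.
apply/negP; rewrite -ltNge.
lra.
Qed.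

Lemma top_max (A : {set X}) t (S L : {set X}) : is_top P A t S -> L \subset A -> (#|L| <= t)%N ->
  PX P L <= PX P S.
Proof.
move=> /and3P[SA /eqP St /forall_inP Stop].
move Hn: #|L :\: S| => n; elim: n L Hn => [|n IH] L Hn LA Lt.
  move/cards0_eq/eqP: Hn; rewrite setD_eq0 => LS.
  by apply: sum_sub.
have [y yLS] : exists y, y \in L :\: S by apply/set0Pn; apply/negP=> /eqP E; rewrite E cards0 in Hn.
have : (0 < #|S :\: L|)%N.
  move: (cardsID S L) (cardsID L S); rewrite setIC; lia.
rewrite card_gt0 => /set0Pn [x xSL].
move: yLS xSL; rewrite !inE => /andP[yS yL] /andP[xL xS].
have Pyx' : P y <= P x by have := Stop x xS; move/forall_inP; apply; rewrite inE yS (subsetP LA y yL).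
apply: le_trans (IH (x |: (L :\ y)) _ _ _).
- by rewrite swapPX //; lra.
- have -> : (x |: (L :\ y)) :\: S = (L :\: S) :\ y.
    apply/setP=> z; rewrite !inE; case: (eqVneq z x) => [->|] /=; first by rewrite xS !andbF.
    by move=> _; case: (z \in S); case: (z != y).
  by move: Hn; rewrite (cardsD1 y (L :\: S)) !inE yS yL /=; lia.
- by rewrite subUset sub1set (subsetP SA x xS) /=; apply: subset_trans LA; apply: subsetDl.
- by rewrite swapcard.
Qed.

Lemma bmax_ge {I : eqType} {r : seq I} {Pr : pred I} {F : I -> R} {i} :
  i \in r -> Pr i -> F i <= \big[Num.max/0]_(j <- r | Pr j) F j.
Proof.
elim: r => [|a r IH] //; rewrite in_cons big_cons => /orP[/eqP<-|ir] Pi.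
  by rewrite Pi le_max lexx.
by case: (Pr a); rewrite ?le_max IH ?orbT.
Qed.

Lemma bmax_le (I : Type) (r : seq I) (Pr : pred I) (F : I -> R) c :
  0 <= c -> (forall j, Pr j -> F j <= c) -> \big[Num.max/0]_(j <- r | Pr j) F j <= c.
Proof.
move=> c0 H; elim/big_rec: _ => // j v Pj vc; by rewrite ge_max H.
Qed.

Lemma sumW_indic (k : nat) (f : X -> 'I_k) (L : {set X}) i :
  \sum_(x in L) P x * ((f x == i)%:R : R) = PX P (L :&: fpre f i).
Proof.
rewrite /PX big_mkcond [RHS]big_mkcond; apply: eq_bigr => x _.
rewrite !inE; case: (x \in L); case: (f x == i) => /=; by rewrite ?mulr1 ?mulr0.
Qed.
End S.
Arguments top_max {R X P} P0 {A t S L}.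

Theorem theorem1 (R : realType) (X : finType) (P : X -> R) (k l : nat)
    (f : X -> 'I_k)
    (hr : (2 <= #|X|)%N)
    (hPpos : forall x, 0 < P x) (hPsum : \sum_(x : X) P x = 1)
    (hk : (2 <= k)%N) (hkr : (k <= #|X|)%N)
    (hl1 : (1 <= l)%N) (hlr : (l < #|X|)%N) :
  (* (i) *)
  (forall rho : R, 0 <= rho -> rho <= 1 / k%:R ->
     is_list_rho_privacy P l f rho (1 - PX P (top_set P [set: X] l)))
  /\
  (* (ii) *)
  is_list_rho_privacy P l f 1
    (1 - \sum_(i < k) PX P (top_set P (fpre f i) (minn l #|fpre f i|)))
  /\
  (* (iii) *)
  (forall (rho : R) (Lam : {set X}), 0 <= rho -> rho <= 1 ->
     is_Lambda_rho P l f rho Lam ->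
     forall W : X -> 'I_k -> R, is_QR f rho W ->
       list_priv P l W <= 1 - Lam_obj P l f rho Lam).
Proof.
have P0 : forall x, 0 <= P x by move=> x; apply: ltW.
have PXge0 : forall S, 0 <= PX P S by move=> S; apply: sumr_ge0 => x _.
split.
  move=> rho r0 rk.
  set T := top_set P [set: X] l.
  have hT : is_top P [set: X] l T by apply: top_exists => //; rewrite cardsT; lia.
  move: (hT) => /and3P[_ /eqP Tl _].
  have kn0 : (k%:R : R) != 0 by rewrite pnatr_eq0; lia.
  split.
    exists (fun _ _ => 1 / k%:R); split.
      split; first by move=> x i; rewrite divr_ge0 // ler0n.
      split => // x.
      by rewrite sumr_const card_ord -[_ *+ k]mulr_natr div1r mulVf.
    rewrite /list_priv; congr (1 - _).
    have -> : \big[Num.max/0]_(L : {set X} | #|L| == l)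
                 \sum_(x in L) P x * (1 / k%:R) = PX P T * (1 / k%:R).
      apply/le_anti/andP; split.
        apply: bmax_le; first by rewrite mulr_ge0 // divr_ge0 // ler0n.
        move=> L /eqP Ll; rewrite -mulr_suml; apply: ler_wpM2r; first by rewrite divr_ge0 // ler0n.
        by apply: (top_max P0 hT); rewrite ?subsetT ?Ll.
      rewrite /PX mulr_suml; apply: (@bmax_ge R _ _ _ (fun L : {set X} => \sum_(x in L) P x * (1 / k%:R))).
        exact: mem_index_enum.
      by rewrite Tl.
    by rewrite sumr_const card_ord -[_ *+ k]mulr_natr div1r mulfVK.
  move=> W [W0 [W1 Wr]].
  rewrite /list_priv lerD2l lerN2.
  apply: le_trans (ler_sum _ (fun i _ => @bmax_ge R _ _ _ (fun L : {set X} => \sum_(x in L) P x * W x i) _ (mem_index_enum T) (introT eqP Tl))).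
  rewrite exchange_big /= /PX le_eqVlt; apply/orP; left; apply/eqP.
  by apply: eq_bigr => x _; rewrite -mulr_sumr W1 mulr1.
split.
  pose W0 := fun (x : X) (i : 'I_k) => ((f x == i)%:R : R).
  have key : forall i : 'I_k, \big[Num.max/0]_(L : {set X} | #|L| == l)
                 \sum_(x in L) P x * W0 x i = PX P (top_set P (fpre f i) (minn l #|fpre f i|)).
    move=> i; set A := fpre f i; set Ti := top_set P A _.
    have hT : is_top P A (minn l #|A|) Ti by apply: top_exists; apply: geq_minr.
    move: (hT) => /and3P[TA /eqP Tc _].
    apply/le_anti/andP; split.
      apply: bmax_le => // L /eqP Ll; rewrite sumW_indic.
      apply: (top_max P0 hT); first exact: subsetIr.
      rewrite leq_min; apply/andP; split.
        by rewrite -Ll; apply: subset_leq_card; apply: subsetIl.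
      by apply: subset_leq_card; apply: subsetIr.
    have [L [TL _ Ll]] : exists L : {set X}, [/\ Ti \subset L, L \subset [set: X] & #|L| = l].
      apply: extend; first exact: subsetT.
      rewrite Tc cardsT; apply/andP; split; [exact: geq_minl | lia].
    apply: le_trans (@bmax_ge R _ _ _ (fun L : {set X} => \sum_(x in L) P x * W0 x i) _ (mem_index_enum L) (introT eqP Ll)).
    rewrite /= sumW_indic; apply: sum_sub => //.
    by rewrite subsetI TL TA.
  have QR0 : is_QR f 1 W0.
    split; first by move=> x i; rewrite /W0 ler0n.
    split; last by move=> x; rewrite /W0 eqxx.
    move=> x; rewrite /W0 (bigD1 (f x)) //= eqxx big1 ?addr0 // => i ne.
    by rewrite eq_sym (negPf ne).
  have val0 : list_priv P l W0 = 1 - \sum_(i < k) PX P (top_set P (fpre f i) (minn l #|fpre f i|)).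
    by rewrite /list_priv; congr (1 - _); apply: eq_bigr => i _; apply: key.
  split; first by exists W0.
  move=> W [Wn [W1 Wr]].
  have EW : forall x i, W x i = W0 x i.
    move=> x i.
    have := W1 x; rewrite (bigD1 (f x)) //= => S1.
    have s0 : 0 <= \sum_(j < k | j != f x) W x j by apply: sumr_ge0 => j _.
    have Wf : W x (f x) = 1 by have := Wr x; lra.
    rewrite /W0; case: (eqVneq (f x) i) => [<-|ne]; first by rewrite Wf.
    have s00 : \sum_(j < k | j != f x) W x j = 0 by lra.
    by rewrite (psumr_eq0P (fun j _ => Wn x j) s00) // eq_sym.
  rewrite -val0 le_eqVlt; apply/orP; left; apply/eqP.
  rewrite /list_priv; congr (1 - _); apply: eq_bigr => i _; apply: eq_bigr => L _.
  by apply: eq_bigr => x _; rewrite EW.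
move=> rho Lam r0 r1 [LamL _] W [Wn [W1 Wr]].
rewrite /list_priv /Lam_obj.
suff : PX P Lam + rho * \sum_(i < k) PX P (top_set P (fpre f i :\: Lam) (minn (l - #|Lam|) #|fpre f i :\: Lam|))
   <= \sum_(i < k) \big[Num.max/0]_(L : {set X} | #|L| == l) \sum_(x in L) P x * W x i by lra.
have -> : PX P Lam = \sum_(i < k) \sum_(x in Lam) P x * W x i.
  by rewrite exchange_big /= /PX; apply: eq_bigr => x _; rewrite -mulr_sumr W1 mulr1.
rewrite mulr_sumr -big_split /=; apply: ler_sum => i _.
set A := fpre f i :\: Lam; set Ti := top_set P A _.
have hT : is_top P A (minn (l - #|Lam|) #|A|) Ti by apply: top_exists; apply: geq_minr.
move: (hT) => /and3P[TA /eqP Tc _].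
have [L [TL _ Ll]] : exists L : {set X}, [/\ Lam :|: Ti \subset L, L \subset [set: X] & #|L| = l].
  apply: extend; first exact: subsetT.
  rewrite cardsU Tc cardsT; apply/andP; split; last lia.
  have := geq_minl (l - #|Lam|) #|A|; lia.
apply: le_trans (@bmax_ge R _ _ _ (fun L : {set X} => \sum_(x in L) P x * W x i) _ (mem_index_enum L) (introT eqP Ll)).
apply: le_trans (@sum_sub R X _ _ _ (fun x => mulr_ge0 (P0 x) (Wn x i)) TL).
rewrite [X in _ <= X](big_setID Lam) /= setUK.
have -> : (Lam :|: Ti) :\: Lam = Ti.
  apply/setP => z; rewrite !inE; case zT: (z \in Ti); rewrite ?orbT ?orbF ?andbT ?andNb //=.
  by have := subsetP TA z zT; rewrite inE => /andP[].
rewrite lerD2l /PX mulr_sumr; apply: ler_sum => x xT.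
rewrite mulrC; apply: ler_wpM2l => //; apply: le_trans (Wr x) _.
have := subsetP TA x xT; rewrite !inE => /andP[_ /eqP ->]; exact: lexx.
Qed.
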